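(* Let $P$ be a program which is safe w.r.t. a mode $M$, let $\mathit{Eqs}$ be a conjunction of equations, and let $G_1$ be a goal without occurrences of disequations. For all goals $G_2$, if there exists a goal $(A',G')$ such that $A'$ is a non-basic atom which does not satisfy $M$ and $(\mathit{Eqs},G_1,G_2)\longmapsto^*_P(A',G')$, then there exists a goal $(A'',G'')$ such that $A''$ is a non-basic atom which does not satisfy $M$ and $(G_1,\mathit{Eqs},G_2)\longmapsto^*_P(A'',G'')$.
   Context: Predicate symbols $\mathit{true}$, $=$, $\neq$ are basic, all others non-basic. Basic atoms: $\mathit{true}$, $t_1=t_2$ (equation), $t_1\neq t_2$ (disequation); non-basic atoms $p(t_1,\dots,t_m)$, $p$ non-basic. A goal is a conjunction of atoms ('','' associative, neutral element $\mathit{true}$). A clause $C$ is $A\leftarrow G$ with non-basic head $hd(C)$ and body $bd(C)$; a program is a set of clauses. All mgu's are relevant and idempotent. A variable $X$ is a local variable of goal $G$ in clause $H\leftarrow G_1,G,G_2$ iff $X\in vars(G)-vars(H,G_1,G_2)$. Operational semantics: (1) $(t_1=t_2,G)\longmapsto_P G\vartheta$ if $t_1,t_2$ unify with mgu $\vartheta$; (2) $(t_1\neq t_2,G)\longmapsto_P G$ if $t_1,t_2$ are not unifiable; (3) $(A,G)\longmapsto_P(bd(C),G)\vartheta$ if $A$ is non-basic, $C$ a renamed apart clause of $P$ and $\vartheta$ an mgu of $A$ and $hd(C)$; $\longmapsto^*_P$ is the reflexive-transitive closure. Modes: a mode for non-basic $p$ of arity $h$ is $p(m_1,\dots,m_h)$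 with $m_i\in\{+,?\}$; $t_i$ is an input argument iff $m_i=+$, and variables in input arguments are input variables; a mode for a program contains exactly one mode for each non-basic predicate occurring in it. An atom satisfies $M$ iff $M$ has a mode for its predicate and its input arguments are ground. A clause $C$ is safe w.r.t. $M$ iff each variable of each disequation $t_1\neq t_2$ in $bd(C)$ is an input variable of $hd(C)$ or a local variable of $t_1\neq t_2$ in $C$; a program is safe iff all its clauses are. *)

(* Defs.v *)
From Stdlib Require Import List Arith.
Import ListNotations.

Inductive term : Type :=
| Var : nat -> term
| Fn : nat -> list term -> term.

Fixpoint tvars (t : term) : list nat :=
  match t with
  | Var x => [x]
  | Fn _ ts => flat_map tvars ts
  end.

Definition ground (t : term) : Prop := tvars t = [].

Definition subst := nat -> term.

Fixpoint tsubst (s : subst) (t : term) : term :=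
  match t with
  | Var x => s x
  | Fn f ts => Fn f (map (tsubst s) ts)
  end.

(** The basic atom [true] is the neutral element of ",", so it is
    represented by the empty goal; the remaining basic atoms are equations
    and disequations; [APred p ts] is the non-basic atom p(ts). *)
Inductive atom : Type :=
| AEq : term -> term -> atom
| ANeq : term -> term -> atom
| APred : nat -> list term -> atom.

Definition nonbasic (a : atom) : Prop :=
  match a with APred _ _ => True | _ => False end.

Definition avars (a : atom) : list nat :=
  match a with
  | AEq t1 t2 | ANeq t1 t2 => tvars t1 ++ tvars t2
  | APred _ ts => flat_map tvars ts
  end.

Definition asubst (s : subst) (a : atom) : atom :=
  match a with
  | AEq t1 t2 => AEq (tsubst s t1) (tsubst s t2)
  | ANeq t1 t2 => ANeq (tsubst s t1) (tsubst s t2)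
  | APred p ts => APred p (map (tsubst s) ts)
  end.

Definition goal := list atom.
Definition gvars (g : goal) : list nat := flat_map avars g.
Definition gsubst (s : subst) (g : goal) : goal := map (asubst s) g.

Record clause := mkClause { hd_pred : nat; hd_args : list term; bd : goal }.
Definition hd (c : clause) : atom := APred (hd_pred c) (hd_args c).
Definition cvars (c : clause) : list nat := avars (hd c) ++ gvars (bd c).

Definition program := clause -> Prop.

Definition is_unifier {X : Type} (sub : subst -> X -> X) (s : subst) (a b : X) : Prop :=
  sub s a = sub s b.

Definition dom_var (s : subst) (x : nat) : Prop := s x <> Var x.

Definition relevant {X : Type} (vs : X -> list nat) (s : subst) (a b : X) : Prop :=
  (forall x, dom_var s x -> In x (vs a ++ vs b)) /\
  (forall x y, dom_var s x -> In y (tvars (s x)) -> In y (vs a ++ vs b)).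

Definition idempotent (s : subst) : Prop :=
  forall x, tsubst s (s x) = s x.

Definition is_mgu {X : Type} (sub : subst -> X -> X) (s : subst) (a b : X) : Prop :=
  is_unifier sub s a b /\
  (forall s', is_unifier sub s' a b ->
     exists e, forall x, s' x = tsubst e (s x)).

Definition rel_idem_mgu {X : Type} (sub : subst -> X -> X) (vs : X -> list nat)
  (s : subst) (a b : X) : Prop :=
  is_mgu sub s a b /\ relevant vs s a b /\ idempotent s.

Definition unifiable (t1 t2 : term) : Prop := exists s, tsubst s t1 = tsubst s t2.

Definition rename_subst (r : nat -> nat) : subst := fun x => Var (r x).
Definition rename_clause (r : nat -> nat) (c : clause) : clause :=
  mkClause (hd_pred c) (map (tsubst (rename_subst r)) (hd_args c))
           (gsubst (rename_subst r) (bd c)).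

Definition renamed_apart (P : program) (g : goal) (c' : clause) : Prop :=
  exists c r, P c /\ (forall x y, r x = r y -> x = y) /\ c' = rename_clause r c /\
    (forall x, In x (cvars c') -> ~ In x (gvars g)).

Inductive step (P : program) : goal -> goal -> Prop :=
| step_eq : forall t1 t2 G s,
    rel_idem_mgu tsubst tvars s t1 t2 ->
    step P (AEq t1 t2 :: G) (gsubst s G)
| step_neq : forall t1 t2 G,
    ~ unifiable t1 t2 ->
    step P (ANeq t1 t2 :: G) G
| step_pred : forall p ts G c s,
    renamed_apart P (APred p ts :: G) c ->
    rel_idem_mgu asubst avars s (APred p ts) (hd c) ->
    step P (APred p ts :: G) (gsubst s (bd c ++ G)).

Inductive steps (P : program) : goal -> goal -> Prop :=
| steps_refl : forall G, steps P G G
| steps_trans : forall G1 G2 G3, step P G1 G2 -> steps P G2 G3 -> steps P G1 G3.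

(** Modes: [M p = Some ms] is the (unique) mode of the predicate [p];
    [true] stands for "+" (input) and [false] for "?". *)
Definition mode := nat -> option (list bool).

(** Input arguments of [p(ts)] w.r.t. [M] (none if [M] has no mode for [p]
    of the right arity). *)
Definition input_args (M : mode) (p : nat) (ts : list term) : list term :=
  match M p with
  | Some ms =>
      if Nat.eqb (length ms) (length ts)
      then map snd (filter (fun bt => fst bt) (combine ms ts))
      else []
  | None => []
  end.

Definition satisfies (M : mode) (a : atom) : Prop :=
  match a with
  | APred p ts =>
      (exists ms, M p = Some ms /\ length ms = length ts) /\
      (forall t, In t (input_args M p ts) -> ground t)
  | _ => False
  end.

Definition input_var_of_head (M : mode) (c : clause) (x : nat) : Prop :=
  In x (flat_map tvars (input_args M (hd_pred c) (hd_args c))).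

Definition safe_clause (M : mode) (c : clause) : Prop :=
  forall B1 B2 t1 t2, bd c = B1 ++ ANeq t1 t2 :: B2 ->
    forall x, In x (tvars t1 ++ tvars t2) ->
      input_var_of_head M c x \/
      ~ In x (avars (hd c) ++ gvars B1 ++ gvars B2).

Definition safe (M : mode) (P : program) : Prop :=
  forall c, P c -> safe_clause M c.

Definition is_disequation (a : atom) : Prop :=
  match a with ANeq _ _ => True | _ => False end.

(* Main.v *)
Require Import Defs.
From Stdlib Require Import List Arith Lia Classical.
Import ListNotations.

Fixpoint term_ind2 (P : term -> Prop) (HV : forall x, P (Var x))
  (HF : forall f ts, Forall P ts -> P (Fn f ts)) (t : term) : P t :=
  match t with
  | Var x => HV x
  | Fn f ts => HF f ts ((fix go (l : list term) : Forall P l :=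
      match l with
      | [] => @Forall_nil term P
      | u :: l' => @Forall_cons term P u l' (term_ind2 P HV HF u) (go l')
      end) ts)
  end.

Lemma tsubst_ext : forall s s' t, (forall x, In x (tvars t) -> s x = s' x) ->
  tsubst s t = tsubst s' t.
Proof.
  intros s s' t; induction t as [x|f ts IH] using term_ind2; simpl; intros H.
  - apply H; auto.
  - f_equal. induction IH as [|u l Hu Hl IHl]; simpl; auto.
    simpl in H. rewrite Hu, IHl; auto; intros; apply H; apply in_app_iff; auto.
Qed.

Lemma tsubst_comp : forall s1 s2 t,
  tsubst s2 (tsubst s1 t) = tsubst (fun x => tsubst s2 (s1 x)) t.
Proof.
  intros s1 s2 t; induction t as [x|f ts IH] using term_ind2; simpl; auto.
  f_equal. rewrite map_map. induction IH; simpl; f_equal; auto.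
Qed.

Lemma tsubst_id : forall t, tsubst Var t = t.
Proof.
  intros t; induction t as [x|f ts IH] using term_ind2; simpl; auto.
  f_equal. induction IH; simpl; f_equal; auto.
Qed.

Lemma in_tvars_subst : forall s t z,
  In z (tvars (tsubst s t)) <-> exists y, In y (tvars t) /\ In z (tvars (s y)).
Proof.
  intros s t z; induction t as [x|f ts IH] using term_ind2; simpl.
  - split; [intros; exists x; auto | intros [y [[->|[]] Hy]]; auto].
  - rewrite in_flat_map. split.
    + intros [u [Hu Hz]]. apply in_map_iff in Hu as [v [<- Hv]].
      rewrite Forall_forall in IH. apply IH in Hz as [y [Hy Hz]]; auto.
      exists y; split; auto. apply in_flat_map; eauto.
    + intros [y [Hy Hz]]. apply in_flat_map in Hy as [v [Hv Hy]].
      exists (tsubst s v); split; [apply in_map; auto|].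
      rewrite Forall_forall in IH. apply IH; eauto.
Qed.

Lemma tsubst_fix : forall s t, (forall x, In x (tvars t) -> s x = Var x) -> tsubst s t = t.
Proof.
  intros. rewrite <- (tsubst_id t) at 2. apply tsubst_ext; auto.
Qed.

Lemma asubst_ext : forall s s' a, (forall x, In x (avars a) -> s x = s' x) ->
  asubst s a = asubst s' a.
Proof.
  intros s s' [t1 t2|t1 t2|p ts] H; simpl in *.
  - rewrite (tsubst_ext s s' t1), (tsubst_ext s s' t2); auto;
      intros; apply H; apply in_app_iff; auto.
  - rewrite (tsubst_ext s s' t1), (tsubst_ext s s' t2); auto;
      intros; apply H; apply in_app_iff; auto.
  - f_equal. induction ts; simpl in *; auto.
    rewrite (tsubst_ext s s' a), IHts; auto; intros; apply H; apply in_app_iff; auto.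
Qed.

Lemma asubst_comp : forall s1 s2 a,
  asubst s2 (asubst s1 a) = asubst (fun x => tsubst s2 (s1 x)) a.
Proof.
  intros s1 s2 [t1 t2|t1 t2|p ts]; simpl; rewrite ?tsubst_comp; auto.
  f_equal. rewrite map_map. apply map_ext. intros; apply tsubst_comp.
Qed.

Lemma in_avars_subst : forall s a z,
  In z (avars (asubst s a)) <-> exists y, In y (avars a) /\ In z (tvars (s y)).
Proof.
  intros s [t1 t2|t1 t2|p ts] z; simpl; rewrite ?in_app_iff, ?in_tvars_subst.
  1,2: split; [intros [[y [? ?]]|[y [? ?]]]; exists y; rewrite in_app_iff; auto
       | intros [y [Hy Hz]]; apply in_app_iff in Hy as [Hy|Hy]; eauto].
  change (In z (tvars (tsubst s (Fn p ts))) <->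
          exists y, In y (tvars (Fn p ts)) /\ In z (tvars (s y))).
  apply in_tvars_subst.
Qed.

Lemma asubst_fix : forall s a, (forall x, In x (avars a) -> s x = Var x) -> asubst s a = a.
Proof.
  intros s a H. transitivity (asubst Var a).
  - apply asubst_ext; auto.
  - destruct a; simpl; rewrite ?tsubst_id; auto. f_equal.
    clear H; induction l; simpl; f_equal; auto; apply tsubst_id.
Qed.

Lemma gsubst_ext : forall s s' g, (forall x, In x (gvars g) -> s x = s' x) ->
  gsubst s g = gsubst s' g.
Proof.
  intros s s' g H; induction g; simpl in *; auto.
  rewrite (asubst_ext s s' a), IHg; auto; intros; apply H; apply in_app_iff; auto.
Qed.

Lemma gsubst_comp : forall s1 s2 g,
  gsubst s2 (gsubst s1 g) = gsubst (fun x => tsubst s2 (s1 x)) g.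
Proof.
  intros; unfold gsubst; rewrite map_map; apply map_ext; intros; apply asubst_comp.
Qed.

Lemma gsubst_app : forall s g1 g2, gsubst s (g1 ++ g2) = gsubst s g1 ++ gsubst s g2.
Proof. intros; apply map_app. Qed.

Lemma in_gvars : forall g z, In z (gvars g) <-> exists a, In a g /\ In z (avars a).
Proof. intros; apply in_flat_map. Qed.

Lemma in_gvars_subst : forall s g z,
  In z (gvars (gsubst s g)) <-> exists y, In y (gvars g) /\ In z (tvars (s y)).
Proof.
  intros s g z; rewrite in_gvars; split.
  - intros [a [Ha Hz]]. apply in_map_iff in Ha as [b [<- Hb]].
    apply in_avars_subst in Hz as [y [Hy Hz]]. exists y; split; auto.
    apply in_gvars; eauto.
  - intros [y [Hy Hz]]. apply in_gvars in Hy as [b [Hb Hy]].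
    exists (asubst s b); split; [apply in_map; auto|]. apply in_avars_subst; eauto.
Qed.

Lemma gvars_app : forall g1 g2 z, In z (gvars (g1 ++ g2)) <-> In z (gvars g1) \/ In z (gvars g2).
Proof. intros; unfold gvars; rewrite flat_map_app, in_app_iff; tauto. Qed.

Definition unif_sys (s : subst) (L : list (term * term)) :=
  Forall (fun e => tsubst s (fst e) = tsubst s (snd e)) L.
Definition lvars (L : list (term * term)) :=
  flat_map (fun e => tvars (fst e) ++ tvars (snd e)) L.
Fixpoint tsize (t : term) : nat :=
  match t with Var _ => 1 | Fn _ ts => S (list_sum (map tsize ts)) end.
Definition lsize (L : list (term * term)) :=
  list_sum (map (fun e => tsize (fst e) + tsize (snd e)) L).

Definition IsMGU L mu :=
  unif_sys mu L /\ (forall s, unif_sys s L -> exists e, forall x, s x = tsubst e (mu x)) /\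
  (forall x, mu x <> Var x -> In x (lvars L)) /\
  (forall x y, mu x <> Var x -> In y (tvars (mu x)) -> In y (lvars L)) /\
  (forall x y, In y (tvars (mu x)) -> mu y = Var y).

Lemma lvars_cons : forall u v L z, In z (lvars ((u, v) :: L)) <->
  In z (tvars u) \/ In z (tvars v) \/ In z (lvars L).
Proof. intros; unfold lvars; simpl; rewrite !in_app_iff; tauto. Qed.

Lemma mgu_nil : IsMGU [] Var.
Proof.
  unfold IsMGU; split; [constructor|]. split; [intros s _; exists s; intros; reflexivity|].
  split; [intros x H; congruence|]. split; [intros x y H; congruence|].
  intros x y [->|[]]; auto.
Qed.

Lemma mgu_drop : forall x L mu, IsMGU L mu -> IsMGU ((Var x, Var x) :: L) mu.
Proof.
  intros x L mu [H1 [H2 [H3 [H4 H5]]]]. repeat split; auto.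
  - constructor; auto.
  - intros s Hs; inversion Hs; auto.
  - intros y Hy; apply lvars_cons; auto.
  - intros y z Hy Hz; apply lvars_cons; eauto.
Qed.

Lemma mgu_swap : forall u v L mu, IsMGU ((u, v) :: L) mu -> IsMGU ((v, u) :: L) mu.
Proof.
  intros u v L mu [H1 [H2 [H3 [H4 H5]]]]. inversion H1; subst. repeat split; auto.
  - constructor; auto.
  - intros s Hs; inversion Hs; subst; apply H2; constructor; auto.
  - intros y Hy; apply H3 in Hy; apply lvars_cons in Hy; apply lvars_cons; tauto.
  - intros y z Hy Hz; eapply H4 in Hz; eauto; apply lvars_cons in Hz; apply lvars_cons; tauto.
Qed.

Lemma unif_combine : forall s ts us, length ts = length us ->
  (map (tsubst s) ts = map (tsubst s) us <-> unif_sys s (combine ts us)).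
Proof.
  intros s ts; induction ts as [|t ts IH]; intros [|u us] Hl; simpl in *; try discriminate.
  - split; auto; constructor.
  - injection Hl as Hl. unfold unif_sys in *; split.
    + intros H; injection H as H1 H2; constructor; auto; apply IH; auto.
    + intros H; inversion H; subst; f_equal; auto; apply IH; auto.
Qed.

Lemma lvars_combine : forall ts us z, In z (lvars (combine ts us)) ->
  In z (flat_map tvars ts) \/ In z (flat_map tvars us).
Proof.
  induction ts as [|t ts IH]; intros [|u us] z H; simpl in *; try tauto.
  apply lvars_cons in H. rewrite !in_app_iff.
  destruct H as [H|[H|H]]; auto. apply IH in H; tauto.
Qed.

Lemma lsize_combine : forall ts us,
  lsize (combine ts us) <= list_sum (map tsize ts) + list_sum (map tsize us).
Proof.
  unfold lsize; induction ts as [|t ts IH]; intros [|u us]; simpl; try lia.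
  specialize (IH us). lia.
Qed.

Lemma lsize_app : forall L1 L2, lsize (L1 ++ L2) = lsize L1 + lsize L2.
Proof. intros; unfold lsize; rewrite map_app, list_sum_app; auto. Qed.

Lemma lvars_app : forall L1 L2 z, In z (lvars (L1 ++ L2)) <-> In z (lvars L1) \/ In z (lvars L2).
Proof. intros; unfold lvars; rewrite flat_map_app, in_app_iff; tauto. Qed.

Lemma unif_app : forall s L1 L2, unif_sys s (L1 ++ L2) <-> unif_sys s L1 /\ unif_sys s L2.
Proof. intros; unfold unif_sys; apply Forall_app. Qed.

Lemma mgu_decomp : forall f ts us L mu, length ts = length us ->
  IsMGU (combine ts us ++ L) mu -> IsMGU ((Fn f ts, Fn f us) :: L) mu.
Proof.
  intros f ts us L mu Hl [H1 [H2 [H3 [H4 H5]]]].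
  assert (Hv : forall z, In z (lvars (combine ts us ++ L)) -> In z (lvars ((Fn f ts, Fn f us) :: L))).
  { intros z Hz; apply lvars_cons; simpl. apply lvars_app in Hz as [Hz|Hz]; auto.
    apply lvars_combine in Hz; tauto. }
  apply unif_app in H1 as [H1a H1b].
  repeat split; auto.
  - constructor; auto. simpl. f_equal. apply unif_combine; auto.
  - intros s Hs. inversion Hs as [|? ? Hs1 Hs2]; subst. apply H2. apply unif_app; split; auto.
    apply unif_combine; auto. simpl in Hs1. injection Hs1; auto.
  - intros y z Hy Hz; eauto.
Qed.

Lemma elem_le_sum : forall (f : term -> nat) l a, In a l -> f a <= list_sum (map f l).
Proof.
  induction l as [|c l IHl]; simpl; intros b Hb; [tauto|]. destruct Hb as [->|H]; [lia|].
  specialize (IHl _ H); lia.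
Qed.

Lemma tsize_sub : forall s t x, In x (tvars t) -> tsize (s x) <= tsize (tsubst s t).
Proof.
  intros s t; induction t as [y|f ts IH] using term_ind2; intros x Hx; simpl in *.
  - destruct Hx as [->|[]]; auto.
  - apply in_flat_map in Hx as [u [Hu Hx]]. rewrite Forall_forall in IH.
    specialize (IH u Hu x Hx). rewrite map_map.
    pose proof (elem_le_sum (fun t => tsize (tsubst s t)) ts u Hu). simpl in H. lia.
Qed.

Lemma occurs_fn : forall s f ts x, In x (tvars (Fn f ts)) -> tsize (s x) < tsize (tsubst s (Fn f ts)).
Proof.
  intros s f ts x Hx; simpl in *.
  apply in_flat_map in Hx as [u [Hu Hx]].
  pose proof (tsize_sub s u x Hx). rewrite map_map.
  pose proof (elem_le_sum (fun t => tsize (tsubst s t)) ts u Hu). simpl in H0. lia.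
Qed.

Lemma var_dec : forall u w, {u = Var w} + {u <> Var w}.
Proof.
  intros [v|f ts] w; [destruct (Nat.eq_dec v w); [left; subst; auto|right; congruence]|right; congruence].
Qed.

Definition psubst (s : subst) (e : term * term) := (tsubst s (fst e), tsubst s (snd e)).
Definition eta (x : nat) (t : term) : subst := fun y => if Nat.eqb y x then t else Var y.

Lemma eta_vars : forall x t u z, ~ In x (tvars t) -> In z (tvars (tsubst (eta x t) u)) ->
  z <> x /\ (In z (tvars u) \/ In z (tvars t)).
Proof.
  intros x t u z Hx Hz. apply in_tvars_subst in Hz as [y [Hy Hz]]. unfold eta in Hz.
  destruct (Nat.eqb_spec y x).
  - split; auto. intros ->; auto.
  - simpl in Hz; destruct Hz as [->|[]]; auto.
Qed.

Lemma lvars_eta : forall x t L z, ~ In x (tvars t) -> In z (lvars (map (psubst (eta x t)) L)) ->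
  z <> x /\ (In z (lvars L) \/ In z (tvars t)).
Proof.
  induction L as [|[u v] L IH]; intros z Hx Hz; simpl in *; [tauto|].
  apply lvars_cons in Hz. destruct Hz as [Hz|[Hz|Hz]].
  - apply eta_vars in Hz as [? [?|?]]; auto; split; auto; left; apply lvars_cons; auto.
  - apply eta_vars in Hz as [? [?|?]]; auto; split; auto; left; apply lvars_cons; auto.
  - apply IH in Hz as [? [?|?]]; auto; split; auto; left; apply lvars_cons; auto.
Qed.

Lemma mgu_elim : forall x t L mu', ~ In x (tvars t) ->
  IsMGU (map (psubst (eta x t)) L) mu' ->
  IsMGU ((Var x, t) :: L) (fun y => tsubst mu' (eta x t y)).
Proof.
  intros x t L mu' Hx [H1 [H2 [H3 [H4 H5]]]].
  set (mu := fun y => tsubst mu' (eta x t y)).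
  assert (Hc : forall u, tsubst mu u = tsubst mu' (tsubst (eta x t) u)).
  { intros; rewrite tsubst_comp; auto. }
  assert (Ht : tsubst (eta x t) t = t).
  { apply tsubst_fix; intros y Hy; unfold eta; destruct (Nat.eqb_spec y x); subst; tauto. }
  assert (Hex : eta x t x = t) by (unfold eta; rewrite Nat.eqb_refl; auto).
  assert (Hey : forall y, y <> x -> eta x t y = Var y)
    by (intros y Hy; unfold eta; destruct (Nat.eqb_spec y x); tauto).
  assert (Hdom : forall y, mu y <> Var y -> In y (lvars ((Var x, t) :: L))).
  { intros y Hy. apply lvars_cons. destruct (Nat.eq_dec y x); [subst; simpl; auto|].
    unfold mu in Hy; rewrite Hey in Hy; auto. simpl in Hy. apply H3 in Hy.
    apply lvars_eta in Hy as [_ [?|?]]; auto. }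
  repeat split.
  - constructor.
    + simpl. rewrite Hc, Ht. unfold mu. rewrite Hex; auto.
    + unfold unif_sys in *. rewrite Forall_forall in *. intros [u v] Huv.
      simpl. rewrite !Hc. apply (H1 (psubst (eta x t) (u, v))). apply in_map; auto.
  - intros s Hs. inversion Hs as [|? ? Hs1 Hs2]; subst. simpl in Hs1.
    assert (E1 : forall y, tsubst s (eta x t y) = s y).
    { intros y; unfold eta; destruct (Nat.eqb_spec y x); subst; auto. }
    destruct (H2 s) as [e He].
    { unfold unif_sys in *; rewrite Forall_forall in *. intros [u v] Huv.
      apply in_map_iff in Huv as [[u' v'] [Heq Hin]]. injection Heq as <- <-. simpl.
      rewrite !tsubst_comp. rewrite (tsubst_ext _ s u'), (tsubst_ext _ s v');
        try (intros; apply E1). apply (Hs2 (u', v') Hin). }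
    exists e. intros y. rewrite <- E1. unfold mu. rewrite tsubst_comp.
    apply tsubst_ext. intros; apply He.
  - intros y Hy. apply Hdom; auto.
  - intros y z Hy Hz. unfold mu in Hz. apply in_tvars_subst in Hz as [w [Hw Hz]].
    destruct (var_dec (mu' w) w) as [Hm|Hm].
    + rewrite Hm in Hz; destruct Hz as [<-|[]].
      destruct (Nat.eq_dec y x); [subst; rewrite Hex in Hw; apply lvars_cons; auto|].
      rewrite Hey in Hw; auto. destruct Hw as [<-|[]]. apply Hdom; auto.
    + apply H4 in Hz; auto. apply lvars_eta in Hz as [_ [?|?]]; auto;
      apply lvars_cons; auto.
  - intros y z Hz. unfold mu in Hz. apply in_tvars_subst in Hz as [w [Hw Hz]].
    assert (Hzx : z <> x).
    { destruct (var_dec (mu' w) w) as [Hm|Hm].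
      - rewrite Hm in Hz; destruct Hz as [<-|[]].
        destruct (Nat.eq_dec y x); [subst; rewrite Hex in Hw; intros ->; auto|].
        rewrite Hey in Hw; auto. destruct Hw as [<-|[]]; auto.
      - apply H4 in Hz; auto. apply lvars_eta in Hz; tauto. }
    unfold mu. rewrite Hey; auto. simpl. eapply H5; eauto.
Qed.

Lemma unif_eta : forall s x t L, unif_sys s ((Var x, t) :: L) ->
  unif_sys s (map (psubst (eta x t)) L).
Proof.
  intros s x t L Hs. inversion Hs as [|? ? Hs1 Hs2]; subst. simpl in Hs1.
  assert (E1 : forall y, tsubst s (eta x t y) = s y).
  { intros y; unfold eta; destruct (Nat.eqb_spec y x); subst; auto. }
  unfold unif_sys in *; rewrite Forall_forall in *. intros [u v] Huv.
  apply in_map_iff in Huv as [[u' v'] [Heq Hin]]. injection Heq as <- <-. simpl.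
  rewrite !tsubst_comp. rewrite (tsubst_ext _ s u'), (tsubst_ext _ s v');
    try (intros; apply E1). apply (Hs2 (u', v') Hin).
Qed.

Definition UnifStmt n := forall m V L, length V < n -> lsize L < m ->
  (forall z, In z (lvars L) -> In z V) -> (exists s, unif_sys s L) -> exists mu, IsMGU L mu.

Lemma elim_case : forall n x t L V, UnifStmt n -> length V < S n ->
  (forall z, In z (lvars ((Var x, t) :: L)) -> In z V) -> ~ In x (tvars t) ->
  (exists s, unif_sys s ((Var x, t) :: L)) -> exists mu, IsMGU ((Var x, t) :: L) mu.
Proof.
  intros n x t L V IH HV Hinc Hx [s Hs].
  destruct (IH (S (lsize (map (psubst (eta x t)) L))) (remove Nat.eq_dec x V)
             (map (psubst (eta x t)) L)) as [mu' Hmu'].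
  - assert (In x V) by (apply Hinc; apply lvars_cons; simpl; auto).
    pose proof (remove_length_lt Nat.eq_dec V x H). lia.
  - lia.
  - intros z Hz. apply lvars_eta in Hz as [Hzx Hz]; auto. apply in_in_remove; auto.
    apply Hinc; apply lvars_cons; tauto.
  - exists s; apply unif_eta; auto.
  - eexists; apply mgu_elim; eauto.
Qed.

Lemma tsize_pos : forall t, 1 <= tsize t.
Proof. destruct t; simpl; lia. Qed.

Lemma unify_aux : forall n, UnifStmt n.
Proof.
  induction n as [|n IHn]; intros m; [intros; lia|].
  induction m as [|m IHm]; intros V L HV HL Hinc Hun; [lia|].
  destruct L as [|[u v] L]; [exists Var; apply mgu_nil|].
  assert (HL' : forall L', lsize L' < lsize L + tsize u + tsize v -> lsize L' < m).
  { unfold lsize in HL; simpl in HL. unfold lsize. intros; lia. }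
  assert (Hunt : exists s, unif_sys s L).
  { destruct Hun as [s Hs]; exists s; inversion Hs; auto. }
  destruct u as [x|f ts].
  - destruct (var_dec v x) as [->|Hv].
    + destruct (IHm V L HV) as [mu Hmu]; auto.
      * apply HL'; simpl; lia.
      * intros z Hz; apply Hinc; apply lvars_cons; auto.
      * exists mu; apply mgu_drop; auto.
    + destruct (in_dec Nat.eq_dec x (tvars v)) as [Hin|Hnin].
      * exfalso. destruct v as [y|g us].
        -- destruct Hin as [->|[]]; auto.
        -- destruct Hun as [s Hs]; inversion Hs as [|? ? Hs1 Hs2]; subst. simpl in Hs1.
           pose proof (occurs_fn s g us x Hin) as H. rewrite Hs1 in H. simpl in H. lia.
      * eapply elim_case; eauto.
  - destruct v as [y|g us].
    + destruct (in_dec Nat.eq_dec y (tvars (Fn f ts))) as [Hin|Hnin].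
      * exfalso. destruct Hun as [s Hs]; inversion Hs as [|? ? Hs1 Hs2]; subst.
        simpl in Hs1. pose proof (occurs_fn s f ts y Hin) as H. rewrite <- Hs1 in H. simpl in H. lia.
      * destruct (elim_case n y (Fn f ts) L V) as [mu Hmu]; auto.
        -- intros z Hz; apply Hinc; apply lvars_cons; apply lvars_cons in Hz; tauto.
        -- destruct Hun as [s Hs]; inversion Hs as [|? ? Hs1 Hs2]; subst.
           exists s; constructor; auto.
        -- exists mu; apply mgu_swap; auto.
    + destruct Hun as [s Hs]; inversion Hs as [|? ? Hs1 Hs2]; subst. simpl in Hs1.
      injection Hs1 as <- Hmap.
      assert (Hlen : length ts = length us)
        by (rewrite <- (length_map (tsubst s) ts), Hmap, length_map; auto).
      destruct (IHm V (combine ts us ++ L) HV) as [mu Hmu].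
      * apply HL'. rewrite lsize_app. pose proof (lsize_combine ts us). simpl. lia.
      * intros z Hz; apply Hinc. apply lvars_app in Hz as [Hz|Hz]; apply lvars_cons; auto.
        apply lvars_combine in Hz; simpl; tauto.
      * exists s. apply unif_app; split; auto. apply unif_combine; auto.
      * exists mu; apply mgu_decomp; auto.
Qed.

Lemma unify : forall L, (exists s, unif_sys s L) -> exists mu, IsMGU L mu.
Proof.
  intros L H. eapply (unify_aux (S (length (lvars L))) (S (lsize L)) (lvars L)); auto.
Qed.

Lemma idem_of : forall mu, (forall x y, In y (tvars (mu x)) -> mu y = Var y) -> idempotent mu.
Proof. intros mu H x. apply tsubst_fix. intros y Hy; eapply H; eauto. Qed.

Lemma mgu_term : forall t1 t2 s, tsubst s t1 = tsubst s t2 ->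
  exists mu, rel_idem_mgu tsubst tvars mu t1 t2.
Proof.
  intros t1 t2 s Hs. destruct (unify [(t1, t2)]) as [mu [H1 [H2 [H3 [H4 H5]]]]].
  { exists s; constructor; auto. }
  assert (Hl : forall z, In z (lvars [(t1, t2)]) -> In z (tvars t1 ++ tvars t2)).
  { intros z Hz; apply lvars_cons in Hz; rewrite in_app_iff; simpl in Hz; tauto. }
  exists mu. split; [split|split; [split|]].
  - inversion H1; auto.
  - intros s' Hs'. apply H2. constructor; auto.
  - intros x Hx; apply Hl; auto.
  - intros x y Hx Hy; apply Hl; eauto.
  - apply idem_of; auto.
Qed.

Lemma mgu_atom : forall p ts q us s,
  asubst s (APred p ts) = asubst s (APred q us) ->
  exists mu, rel_idem_mgu asubst avars mu (APred p ts) (APred q us).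
Proof.
  intros p ts q us s Hs. destruct (unify [(Fn p ts, Fn q us)]) as [mu [H1 [H2 [H3 [H4 H5]]]]].
  { exists s; constructor; auto. simpl in *. injection Hs as -> ->; auto. }
  assert (Hl : forall z, In z (lvars [(Fn p ts, Fn q us)]) ->
     In z (avars (APred p ts) ++ avars (APred q us))).
  { intros z Hz; apply lvars_cons in Hz; rewrite in_app_iff; simpl in Hz; simpl; tauto. }
  exists mu. split; [split|split; [split|]].
  - inversion H1 as [|? ? E]; subst. simpl in E. injection E as -> E. unfold is_unifier.
    simpl; rewrite E; auto.
  - intros s' Hs'. apply H2. constructor; auto. unfold is_unifier in Hs'. simpl in *.
    injection Hs' as -> ->; auto.
  - intros x Hx; apply Hl; auto.
  - intros x y Hx Hy; apply Hl; eauto.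
  - apply idem_of; auto.
Qed.

Definition eqa (e : term * term) : atom := AEq (fst e) (snd e).
Definition MGI (S X : goal) (E : list (term * term)) :=
  (exists s, unif_sys s E /\ S = gsubst s X) /\
  (forall s, unif_sys s E -> exists r, gsubst s X = gsubst r S).
Definition cmp (s1 s2 : subst) : subst := fun x => tsubst s2 (s1 x).

Lemma gsubst_eqa : forall s E, gsubst s (map eqa E) = map eqa (map (psubst s) E).
Proof. intros; unfold gsubst; rewrite !map_map; apply map_ext; intros [u v]; reflexivity. Qed.

Lemma unif_ext : forall s s' E, (forall x, In x (lvars E) -> s x = s' x) ->
  unif_sys s E -> unif_sys s' E.
Proof.
  intros s s' E H HE. unfold unif_sys in *; rewrite Forall_forall in *.
  intros [u v] Huv. specialize (HE _ Huv); simpl in *.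
  rewrite <- (tsubst_ext s s' u), <- (tsubst_ext s s' v); auto;
    intros; apply H; unfold lvars; apply in_flat_map; exists (u, v); simpl;
    rewrite in_app_iff; auto.
Qed.

Lemma unif_psubst : forall s k E, unif_sys s (map (psubst k) E) <-> unif_sys (cmp k s) E.
Proof.
  intros; unfold unif_sys; rewrite Forall_map; split; apply Forall_impl;
    intros [u v]; unfold cmp; simpl; rewrite !tsubst_comp; auto.
Qed.

Lemma unif_post : forall s r E, unif_sys s E -> unif_sys (cmp s r) E.
Proof.
  intros s r E; unfold unif_sys; apply Forall_impl; intros [u v]; unfold cmp; simpl.
  rewrite <- !tsubst_comp; intros ->; auto.
Qed.

Lemma gsubst_cmp : forall s1 s2 X, gsubst (cmp s1 s2) X = gsubst s2 (gsubst s1 X).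
Proof. intros; rewrite gsubst_comp; reflexivity. Qed.

Lemma gsubst_pw : forall s s' X, (forall x, s x = s' x) -> gsubst s X = gsubst s' X.
Proof. intros; apply gsubst_ext; auto. Qed.

Lemma unif_pw : forall s s' E, (forall x, s x = s' x) -> unif_sys s E -> unif_sys s' E.
Proof. intros; eapply unif_ext; eauto. Qed.

Lemma MGI_fwd : forall k t1 t2 S X E, is_mgu tsubst k t1 t2 ->
  MGI S (gsubst k X) (map (psubst k) E) -> MGI S X ((t1, t2) :: E).
Proof.
  intros k t1 t2 S X E [Hk Hg] [[s [Hs ->]] Hgen]. split.
  - exists (cmp k s). split.
    + constructor. simpl. unfold cmp; rewrite <- !tsubst_comp. unfold is_unifier in Hk; rewrite Hk; auto.
      apply unif_psubst; auto.
    + rewrite gsubst_cmp; auto.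
  - intros s' Hs'. inversion Hs' as [|? ? H1 H2]; subst.
    destruct (Hg s' H1) as [e He].
    destruct (Hgen e) as [r Hr].
    + apply unif_psubst. eapply unif_pw; [|exact H2]. intros; unfold cmp; rewrite He; auto.
    + exists r. rewrite <- Hr, <- gsubst_cmp. apply gsubst_pw; auto.
Qed.

Lemma MGI_bwd : forall k t1 t2 S X E, is_mgu tsubst k t1 t2 ->
  MGI S X ((t1, t2) :: E) -> MGI S (gsubst k X) (map (psubst k) E).
Proof.
  intros k t1 t2 S X E [Hk Hg] [[s [Hs ->]] Hgen].
  inversion Hs as [|? ? H1 H2]; subst. destruct (Hg s H1) as [e He]. split.
  - exists e. split.
    + apply unif_psubst. eapply unif_pw; [|exact H2]; auto.
    + rewrite <- gsubst_cmp. apply gsubst_pw; auto.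
  - intros s' Hs'. apply unif_psubst in Hs'. destruct (Hgen (cmp k s')) as [r Hr].
    + constructor; auto. simpl. unfold cmp; rewrite <- !tsubst_comp.
      unfold is_unifier in Hk; rewrite Hk; auto.
    + exists r. rewrite <- gsubst_cmp; auto.
Qed.

Lemma case_neq : forall S X E t1 t2 u1 u2 S',
  MGI S (ANeq t1 t2 :: X) E ->
  (forall x, In x (tvars t1 ++ tvars t2) -> ~ In x (lvars E)) ->
  S = ANeq u1 u2 :: S' -> ~ unifiable u1 u2 -> ~ unifiable t1 t2 /\ MGI S' X E.
Proof.
  intros S X E t1 t2 u1 u2 S' [[s0 [Hs0 HS]] Hgen] Hdis -> Hnu.
  simpl in HS. injection HS as Hu1 Hu2 HS'. split.
  - intros [s Hs].
    set (sg := fun x => if in_dec Nat.eq_dec x (tvars t1 ++ tvars t2) then s x else s0 x).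
    destruct (Hgen sg) as [r Hr].
    + eapply unif_ext; [|exact Hs0]. intros x Hx. unfold sg.
      destruct (in_dec Nat.eq_dec x (tvars t1 ++ tvars t2)); auto.
      exfalso; eapply Hdis; eauto.
    + simpl in Hr. injection Hr as Hr1 Hr2 _. apply Hnu. exists r.
      rewrite <- Hr1, <- Hr2.
      rewrite (tsubst_ext sg s t1), (tsubst_ext sg s t2); auto;
        intros x Hx; unfold sg; destruct (in_dec Nat.eq_dec x (tvars t1 ++ tvars t2)); auto;
        exfalso; apply n; apply in_app_iff; auto.
  - split.
    + exists s0; auto.
    + intros s Hs. destruct (Hgen s Hs) as [r Hr]. simpl in Hr. injection Hr as _ _ Hr.
      exists r; auto.
Qed.

Lemma case_eq : forall S X E t1 t2 u1 u2 S' nu,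
  MGI S (AEq t1 t2 :: X) E -> S = AEq u1 u2 :: S' -> is_mgu tsubst nu u1 u2 ->
  exists k, rel_idem_mgu tsubst tvars k t1 t2 /\
    MGI (gsubst nu S') (gsubst k X) (map (psubst k) E).
Proof.
  intros S X E t1 t2 u1 u2 S' nu [[s0 [Hs0 HS]] Hgen] -> [Hnu Hnug].
  simpl in HS. injection HS as Hu1 Hu2 HS'.
  destruct (mgu_term t1 t2 (cmp s0 nu)) as [k Hk].
  { unfold cmp; rewrite <- !tsubst_comp, <- Hu1, <- Hu2; auto. }
  exists k; split; auto. destruct Hk as [[Hk Hkg] _].
  split.
  - destruct (Hkg (cmp s0 nu)) as [e He].
    { unfold is_unifier, cmp; rewrite <- !tsubst_comp, <- Hu1, <- Hu2; auto. }
    exists e; split.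
    + apply unif_psubst. eapply unif_pw; [|apply unif_post; exact Hs0]; auto.
    + rewrite HS', <- gsubst_cmp, <- gsubst_cmp. apply gsubst_pw; auto.
  - intros s Hs. apply unif_psubst in Hs. destruct (Hgen _ Hs) as [r0 Hr0].
    simpl in Hr0. injection Hr0 as E1 E2 E3.
    destruct (Hnug r0) as [e' He'].
    { unfold is_unifier. rewrite <- E1, <- E2. unfold cmp; rewrite <- !tsubst_comp.
      unfold is_unifier in Hk; rewrite Hk; auto. }
    exists e'. rewrite <- gsubst_cmp, <- gsubst_cmp, E3. apply gsubst_pw; auto.
Qed.

Lemma glue : forall (r : nat -> nat), (forall x y, r x = r y -> x = y) ->
  forall (l : list nat) (f g : subst), exists h,
  (forall x, In x l -> h (r x) = f x) /\ (forall y, (forall x, In x l -> y <> r x) -> h y = g y).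
Proof.
  intros r Hr l f g.
  exists (fun y => match find (fun x => Nat.eqb (r x) y) l with Some x => f x | None => g y end).
  split.
  - intros x Hx. destruct (find (fun x' => Nat.eqb (r x') (r x)) l) eqn:E.
    + apply find_some in E as [_ E]. apply Nat.eqb_eq, Hr in E. subst; auto.
    + exfalso. apply (find_none _ _ E) in Hx. rewrite Nat.eqb_refl in Hx; discriminate.
  - intros y Hy. destruct (find (fun x' => Nat.eqb (r x') y) l) eqn:E; auto.
    apply find_some in E as [E1 E2]. apply Nat.eqb_eq in E2. exfalso; eapply Hy; eauto.
Qed.

Lemma cvars_rename : forall r c z, In z (cvars (rename_clause r c)) ->
  exists x, In x (cvars c) /\ z = r x.
Proof.
  intros r c z Hz. unfold cvars in *. apply in_app_iff in Hz as [Hz|Hz].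
  - change (In z (avars (asubst (rename_subst r) (Defs.hd c)))) in Hz.
    apply in_avars_subst in Hz as [y [Hy [<-|[]]]]. exists y; rewrite in_app_iff; auto.
  - change (In z (gvars (gsubst (rename_subst r) (bd c)))) in Hz.
    apply in_gvars_subst in Hz as [y [Hy [<-|[]]]]. exists y; rewrite in_app_iff; auto.
Qed.

Lemma cvars_rename_in : forall r c x, In x (cvars c) -> In (r x) (cvars (rename_clause r c)).
Proof.
  intros r c x Hx. unfold cvars in *. apply in_app_iff in Hx as [Hx|Hx]; apply in_app_iff.
  - left. change (In (r x) (avars (asubst (rename_subst r) (Defs.hd c)))).
    apply in_avars_subst. exists x; simpl; auto.
  - right. change (In (r x) (gvars (gsubst (rename_subst r) (bd c)))).
    apply in_gvars_subst. exists x; simpl; auto.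
Qed.

Lemma hd_rename : forall r c, Defs.hd (rename_clause r c) = asubst (rename_subst r) (Defs.hd c).
Proof. reflexivity. Qed.
Lemma bd_rename : forall r c, bd (rename_clause r c) = gsubst (rename_subst r) (bd c).
Proof. reflexivity. Qed.

Lemma glue_hd : forall r c h f, (forall x, In x (cvars c) -> h (r x) = f x) ->
  asubst h (Defs.hd (rename_clause r c)) = asubst f (Defs.hd c).
Proof.
  intros. rewrite hd_rename, asubst_comp. apply asubst_ext. intros x Hx; simpl; apply H.
  unfold cvars; apply in_app_iff; auto.
Qed.

Lemma glue_bd : forall r c h f, (forall x, In x (cvars c) -> h (r x) = f x) ->
  gsubst h (bd (rename_clause r c)) = gsubst f (bd c).
Proof.
  intros. rewrite bd_rename, gsubst_comp. apply gsubst_ext. intros x Hx; simpl; apply H.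
  unfold cvars; apply in_app_iff; auto.
Qed.

Lemma case_pred : forall S X E p ts p' us S' c c0 r c' r' nu,
  MGI S (APred p ts :: X) E -> S = APred p' us :: S' ->
  (forall x y, r x = r y -> x = y) -> c = rename_clause r c0 ->
  (forall x, In x (cvars c) -> ~ In x (gvars S)) ->
  is_mgu asubst nu (APred p' us) (Defs.hd c) ->
  (forall x y, r' x = r' y -> x = y) -> c' = rename_clause r' c0 ->
  (forall x, In x (cvars c') -> ~ In x (gvars (APred p ts :: X)) /\ ~ In x (lvars E)) ->
  exists k, rel_idem_mgu asubst avars k (APred p ts) (Defs.hd c') /\
    MGI (gsubst nu (bd c ++ S')) (gsubst k (bd c' ++ X)) (map (psubst k) E).
Proof.
  intros S X E p ts p' us S' c c0 r c' r' nu [[s0 [Hs0 HS]] Hgen] HSe Hr Hc Hcap [Hnu Hnug]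
    Hr' Hc' Hc'ap.
  assert (HS0 := HS). rewrite HSe in HS. simpl in HS. injection HS as Hp Hus HS'.
  destruct (glue r' Hr' (cvars c0) (fun x => nu (r x)) (cmp s0 nu)) as [phi [Hphi1 Hphi2]].
  assert (Hphi3 : forall y, In y (gvars (APred p ts :: X)) \/ In y (lvars E) -> phi y = cmp s0 nu y).
  { intros y Hy. apply Hphi2. intros x Hx ->.
    destruct (Hc'ap (r' x)) as [A B]; [subst c'; apply cvars_rename_in; auto|]. tauto. }
  assert (Hunphi : asubst phi (APred p ts) = asubst phi (Defs.hd c')).
  { rewrite Hc', (glue_hd r' c0 phi (fun x => nu (r x))); auto.
    rewrite (asubst_ext phi (cmp s0 nu)).
    2:{ intros x Hx; apply Hphi3; left; simpl; apply in_app_iff; auto. }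
    unfold cmp; rewrite <- asubst_comp. simpl asubst at 2. rewrite <- Hp, <- Hus.
    change (APred p' us) with (APred p' us). unfold is_unifier in Hnu.
    transitivity (asubst nu (APred p' us)); [subst; reflexivity|].
    rewrite Hnu, Hc, hd_rename, asubst_comp. reflexivity. }
  destruct (mgu_atom p ts (hd_pred c') (hd_args c') phi Hunphi) as [k Hk].
  exists k; split; auto. destruct Hk as [[Hk Hkg] _].
  split.
  - destruct (Hkg phi Hunphi) as [e He]. exists e. split.
    + apply unif_psubst. eapply unif_ext; [|apply unif_post; exact Hs0].
      intros x Hx. unfold cmp. rewrite <- He. symmetry. apply Hphi3; auto.
    + rewrite <- gsubst_cmp, (gsubst_pw (cmp k e) phi) by (intros; unfold cmp; rewrite He; auto).
      rewrite !gsubst_app. f_equal.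
      * rewrite Hc', (glue_bd r' c0 phi (fun x => nu (r x))); auto.
        rewrite Hc, bd_rename, gsubst_comp. reflexivity.
      * rewrite HS', <- gsubst_cmp. apply gsubst_ext. intros x Hx. symmetry; apply Hphi3.
        left; simpl; apply in_app_iff; auto.
  - intros s Hs. apply unif_psubst in Hs. destruct (Hgen _ Hs) as [r0 Hr0].
    rewrite HSe in Hr0. simpl in Hr0. injection Hr0 as Hr0p Hr0a Hr0X.
    destruct (glue r Hr (cvars c0) (fun x => cmp k s (r' x)) r0) as [psi [Hpsi1 Hpsi2]].
    assert (Hpsi3 : forall y, In y (gvars S) -> psi y = r0 y).
    { intros y Hy. apply Hpsi2. intros x Hx ->. apply (Hcap (r x)); auto.
      subst c; apply cvars_rename_in; auto. }
    destruct (Hnug psi) as [e' He'].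
    { unfold is_unifier. rewrite (asubst_ext psi r0).
      2:{ intros x Hx; apply Hpsi3. rewrite HSe; simpl; apply in_app_iff; auto. }
      rewrite Hc, (glue_hd r c0 psi (fun x => cmp k s (r' x))); auto.
      simpl. rewrite <- Hr0a.
      assert (Hkk : asubst (cmp k s) (APred p ts) = asubst (cmp k s) (Defs.hd c')).
      { unfold cmp; rewrite <- !asubst_comp. unfold is_unifier in Hk. rewrite Hk. auto. }
      rewrite Hc', hd_rename, asubst_comp in Hkk. simpl in Hkk.
      rewrite Hp; exact Hkk. }
    exists e'. rewrite <- gsubst_cmp, <- gsubst_cmp.
    rewrite (gsubst_pw (cmp nu e') psi) by (intros; unfold cmp; rewrite He'; auto).
    rewrite !gsubst_app. f_equal.
    + rewrite Hc', Hc, (glue_bd r c0 psi (fun x => cmp k s (r' x))); auto.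
      rewrite bd_rename, gsubst_comp. reflexivity.
    + rewrite Hr0X. apply gsubst_ext. intros x Hx. symmetry. apply Hpsi3.
      rewrite HSe; simpl; apply in_app_iff; auto.
Qed.

Lemma diseq_subst : forall s a, is_disequation (asubst s a) <-> is_disequation a.
Proof. intros s [] ; simpl; tauto. Qed.
Lemma nonbasic_subst : forall s a, nonbasic (asubst s a) <-> nonbasic a.
Proof. intros s [] ; simpl; tauto. Qed.

Lemma input_args_map : forall M p f ts,
  input_args M p (map f ts) = map f (input_args M p ts).
Proof.
  intros M p f ts. unfold input_args. destruct (M p) as [ms|]; auto.
  rewrite length_map. destruct (Nat.eqb (length ms) (length ts)); auto.
  clear. revert ts; induction ms as [|b ms IH]; intros [|t ts]; simpl; auto.
  destruct b; simpl; rewrite IH; auto.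
Qed.

Lemma ground_subst : forall s t, ground t -> tsubst s t = t.
Proof. intros s t H; apply tsubst_fix; unfold ground in H; rewrite H; simpl; tauto. Qed.

Lemma satisfies_subst : forall M s a, satisfies M a -> satisfies M (asubst s a).
Proof.
  intros M s [| |p ts]; simpl; try tauto. intros [[ms [H1 H2]] H3]. split.
  - exists ms; rewrite length_map; auto.
  - intros t Ht. rewrite input_args_map in Ht. apply in_map_iff in Ht as [u [<- Hu]].
    rewrite ground_subst; auto.
Qed.

Lemma lvars_gvars : forall E x, In x (lvars E) <-> In x (gvars (map eqa E)).
Proof.
  induction E as [|[u v] E IH]; intros x; [simpl; tauto|].
  rewrite lvars_cons, IH.
  change (gvars (map eqa ((u,v)::E))) with (avars (AEq u v) ++ gvars (map eqa E)).
  simpl avars. rewrite !in_app_iff; tauto.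
Qed.

Definition Iso (H : goal) (E : list (term * term)) (K : goal) :=
  forall d b x, In d H -> is_disequation d -> In b (H ++ map eqa E ++ K) ->
    ~ is_disequation b -> In x (avars d) -> ~ In x (avars b).

Lemma iso_nil : forall E K, Iso [] E K.
Proof. intros E K d b x []. Qed.

Lemma iso_neq : forall d H E K, Iso (d :: H) E K -> Iso H E K.
Proof. intros d H E K HI d' b x H1 H2 H3 H4 H5. eapply HI; simpl; eauto. Qed.

Lemma iso_disj : forall t1 t2 H E K, Iso (ANeq t1 t2 :: H) E K ->
  forall x, In x (tvars t1 ++ tvars t2) -> ~ In x (lvars E).
Proof.
  intros t1 t2 H E K HI x Hx HE. apply lvars_gvars, in_gvars in HE as [b [Hb Hxb]].
  eapply (HI (ANeq t1 t2) b x); simpl; eauto.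
  - right; apply in_app_iff; right; apply in_app_iff; auto.
  - apply in_map_iff in Hb as [e [<- _]]; simpl; auto.
Qed.

Lemma in_subst_goal : forall s g b, In b (gsubst s g) -> exists b0, In b0 g /\ b = asubst s b0.
Proof. intros s g b Hb; apply in_map_iff in Hb as [b0 [<- Hb0]]; eauto. Qed.

Lemma iso_finish : forall (k : subst) (RV : list nat) b0 x,
  (forall y, k y <> Var y -> In y RV) ->
  (forall y z, k y <> Var y -> In z (tvars (k y)) -> In z RV) ->
  ~ In x RV -> ~ In x (avars b0) -> ~ In x (avars (asubst k b0)).
Proof.
  intros k RV b0 x Hd Hr Hx Hb Hin. apply in_avars_subst in Hin as [w [Hw Hxw]].
  destruct (var_dec (k w) w) as [E|E].
  - rewrite E in Hxw; destruct Hxw as [<-|[]]; auto.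
  - apply Hx; eauto.
Qed.

Lemma iso_eq : forall t1 t2 H E K k, Iso (AEq t1 t2 :: H) E K ->
  rel_idem_mgu tsubst tvars k t1 t2 ->
  Iso (gsubst k H) (map (psubst k) E) (gsubst k K).
Proof.
  intros t1 t2 H E K k HI [_ [[Hd Hr] _]] d b x Hdin Hdd Hbin Hbd Hx.
  apply in_subst_goal in Hdin as [d0 [Hd0 ->]]. apply diseq_subst in Hdd.
  rewrite <- gsubst_eqa, <- !gsubst_app in Hbin.
  apply in_subst_goal in Hbin as [b0 [Hb0 ->]]. rewrite diseq_subst in Hbd.
  apply in_avars_subst in Hx as [y [Hy Hxy]].
  assert (Hy1 : ~ In y (tvars t1 ++ tvars t2)).
  { intro Hc. eapply (HI d0 (AEq t1 t2) y); simpl; auto. }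
  assert (Hky : k y = Var y).
  { destruct (var_dec (k y) y); auto. exfalso; apply Hy1; apply Hd; auto. }
  rewrite Hky in Hxy; destruct Hxy as [<-|[]].
  apply (iso_finish k (tvars t1 ++ tvars t2)); auto.
  eapply HI; simpl; eauto.
Qed.

Lemma in_ren : forall r, (forall x y, r x = r y -> x = y) -> forall a z,
  In (r z) (avars (asubst (rename_subst r) a)) -> In z (avars a).
Proof.
  intros r Hr a z H. apply in_avars_subst in H as [w [Hw [E|[]]]].
  apply Hr in E; subst; auto.
Qed.

Lemma iso_pred : forall M p ts H E K c0 r' k,
  Iso (APred p ts :: H) E K -> satisfies M (APred p ts) -> safe_clause M c0 ->
  (forall x y, r' x = r' y -> x = y) ->
  (forall x, In x (cvars (rename_clause r' c0)) ->
     ~ In x (gvars (APred p ts :: H ++ map eqa E ++ K))) ->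
  rel_idem_mgu asubst avars k (APred p ts) (Defs.hd (rename_clause r' c0)) ->
  Iso (gsubst k (bd (rename_clause r' c0) ++ H)) (map (psubst k) E) (gsubst k K).
Proof.
  intros M p ts H E K c0 r' k HI Hsat Hsafe Hr' Hap [[Hk _] [[Hd Hr] _]]
    d b x Hdin Hdd Hbin Hbd Hx.
  set (c' := rename_clause r' c0) in *.
  set (RV := avars (APred p ts) ++ avars (Defs.hd c')).
  assert (HT : forall y b1, In b1 (APred p ts :: H ++ map eqa E ++ K) -> In y (avars b1) ->
     ~ In y (cvars c')).
  { intros y b1 Hb1 Hy Hc. apply (Hap y Hc). apply in_gvars; eauto. }
  assert (Hbdc : forall y b1, In b1 (bd c') -> In y (avars b1) -> In y (cvars c')).
  { intros y b1 Hb1 Hy. unfold cvars; apply in_app_iff; right; apply in_gvars; eauto. }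
  assert (Hhdc : forall y, In y (avars (Defs.hd c')) -> In y (cvars c')).
  { intros y Hy. unfold cvars; apply in_app_iff; auto. }
  apply in_subst_goal in Hdin as [d0 [Hd0 ->]]. apply diseq_subst in Hdd.
  rewrite <- gsubst_eqa, <- !gsubst_app in Hbin.
  apply in_subst_goal in Hbin as [b0 [Hb0 ->]]. rewrite diseq_subst in Hbd.
  assert (Hb0' : In b0 (bd c') \/ In b0 (H ++ map eqa E ++ K)).
  { rewrite !in_app_iff in Hb0; rewrite !in_app_iff; tauto. }
  clear Hb0.
  apply in_avars_subst in Hx as [y [Hy Hxy]].
  assert (Claim : ~ In y RV /\ (forall b1, In b1 (bd c') \/ In b1 (H ++ map eqa E ++ K) ->
     ~ is_disequation b1 -> ~ In y (avars b1))).
  { apply in_app_iff in Hd0 as [Hd0|Hd0].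
    - unfold c' in Hd0; rewrite bd_rename in Hd0.
      apply in_subst_goal in Hd0 as [e0 [He0 ->]]. apply diseq_subst in Hdd.
      destruct e0 as [|t1 t2|]; try contradiction.
      apply in_split in He0 as [B1 [B2 HB]].
      apply in_avars_subst in Hy as [z [Hz [Eyz|[]]]]. subst y.
      assert (Hzc : In z (cvars c0)).
      { unfold cvars; apply in_app_iff; right; rewrite HB; apply in_gvars.
        exists (ANeq t1 t2); split; auto; apply in_app_iff; simpl; auto. }
      destruct (Hsafe B1 B2 t1 t2 HB z Hz) as [Hin|Hloc].
      + exfalso. unfold input_var_of_head in Hin. apply in_flat_map in Hin as [t0 [Ht0 Hzt0]].
        set (t' := tsubst (rename_subst r') t0).
        assert (Ht' : In (tsubst k t') (input_args M p (map (tsubst k) ts))).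
        { simpl in Hk. injection Hk as Hp Hts. rewrite Hts, Hp.
          rewrite !input_args_map. apply in_map, in_map; auto. }
        rewrite input_args_map in Ht'. apply in_map_iff in Ht' as [ta [Hta Hta']].
        destruct Hsat as [_ Hg]. specialize (Hg ta Hta').
        rewrite ground_subst in Hta; auto. unfold ground in Hg.
        assert (In x (tvars ta)).
        { rewrite Hta. apply in_tvars_subst. exists (r' z); split; auto.
          unfold t'; apply in_tvars_subst; exists z; simpl; auto. }
        rewrite Hg in H0; auto.
      + rewrite !in_app_iff in Hloc. split.
        * unfold RV; rewrite in_app_iff; intros [Hc|Hc].
          -- eapply HT; [left; reflexivity|exact Hc|]. apply cvars_rename_in; auto.
          -- unfold c' in Hc; rewrite hd_rename in Hc. apply in_ren in Hc; auto.
        * intros b1 [Hb1|Hb1] Hb1d Hyb.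
          -- unfold c' in Hb1; rewrite bd_rename in Hb1.
             apply in_subst_goal in Hb1 as [e1 [He1 ->]].
             apply in_ren in Hyb; auto. rewrite diseq_subst in Hb1d.
             rewrite HB in He1. apply in_app_iff in He1 as [He1|[<-|He1]].
             ++ apply Hloc; right; left; apply in_gvars; eauto.
             ++ apply Hb1d; simpl; auto.
             ++ apply Hloc; right; right; apply in_gvars; eauto.
          -- eapply HT; [right; exact Hb1|exact Hyb|]. apply cvars_rename_in; auto.
    - assert (Hyc : ~ In y (cvars c')).
      { eapply HT; eauto. right; apply in_app_iff; auto. }
      split.
      + unfold RV; rewrite in_app_iff; intros [Hc|Hc].
        * eapply (HI d0 (APred p ts) y); simpl; eauto.
        * apply Hyc, Hhdc; auto.
      + intros b1 [Hb1|Hb1] Hb1d Hyb.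
        * apply Hyc; eapply Hbdc; eauto.
        * eapply (HI d0 b1 y); simpl; eauto. }
  destruct Claim as [HyRV Hyb].
  assert (Hky : k y = Var y).
  { destruct (var_dec (k y) y); auto. exfalso; apply HyRV, Hd; auto. }
  rewrite Hky in Hxy; destruct Hxy as [<-|[]].
  apply (iso_finish k RV); auto.
Qed.

Definition maxl (l : list nat) := fold_right max 0 l.
Lemma maxl_ge : forall l x, In x l -> x <= maxl l.
Proof.
  induction l as [|a l IHl]; simpl; intros x Hx; [tauto|].
  destruct Hx as [->|Hx]; [lia|]. specialize (IHl x Hx); lia.
Qed.

Lemma fresh_ren : forall (T : goal) c0, exists r', (forall x y, r' x = r' y -> x = y) /\
  forall x, In x (cvars (rename_clause r' c0)) -> ~ In x (gvars T).
Proof.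
  intros T c0. exists (fun x => x + S (maxl (gvars T))). split; [intros; lia|].
  intros x Hx Hin. apply cvars_rename in Hx as [z [_ ->]].
  apply maxl_ge in Hin. lia.
Qed.

Section Main.
Variable P : program.
Variable M : mode.

Definition Fl (T : goal) := exists A G, nonbasic A /\ ~ satisfies M A /\ steps P T (A :: G).

Lemma Fl_step : forall T T1, step P T T1 -> Fl T1 -> Fl T.
Proof. intros T T1 Hs [A [G [H1 [H2 H3]]]]. exists A, G; repeat split; auto; econstructor; eauto. Qed.

Definition Hyp (S : goal) := forall a H E K, MGI S (a :: H ++ K) E ->
  (E = [] \/ Iso (a :: H) E K) -> Fl (a :: H ++ map eqa E ++ K).

Lemma core : forall S, S <> [] -> Hyp S -> forall n H E K, length E <= n ->
  MGI S (H ++ K) E -> (E = [] \/ Iso H E K) -> Fl (H ++ map eqa E ++ K).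
Proof.
  intros S HS Hy n. induction n as [|n IH]; intros H E K Hl HM HI.
  all: destruct H as [|a H]; [|apply Hy; auto].
  all: destruct E as [|[t1 t2] E].
  1,3: destruct K as [|a K]; [destruct HM as [[s [_ HS']] _]; simpl in HS'; congruence|];
    simpl; rewrite <- (app_nil_r K); apply (Hy a K [] []); [rewrite app_nil_r; auto|auto].
  - simpl in Hl; lia.
  - assert (HM2 := HM). destruct HM2 as [[s [Hs HS']] Hg]. inversion Hs as [|? ? Hs1 Hs2]; subst.
    destruct (mgu_term t1 t2 s Hs1) as [k Hk].
    eapply Fl_step.
    + simpl. apply step_eq; exact Hk.
    + rewrite gsubst_app, gsubst_eqa. apply (IH [] (map (psubst k) E) (gsubst k K)).
      * rewrite length_map; simpl in Hl; lia.
      * apply (MGI_bwd k t1 t2); [apply Hk|exact HM].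
      * right; apply iso_nil.
Qed.

Lemma core' : forall S, S <> [] -> Hyp S -> forall H E K,
  MGI S (H ++ K) E -> (E = [] \/ Iso H E K) -> Fl (H ++ map eqa E ++ K).
Proof. intros; eapply core; eauto. Qed.

Lemma steps_ne : forall S A G, steps P S (A :: G) -> S <> [].
Proof. intros S A G Hs; inversion Hs; subst; try discriminate. inversion H; discriminate. Qed.

Lemma main : safe M P -> forall S Z, steps P S Z -> forall A G, Z = A :: G -> nonbasic A ->
  ~ satisfies M A -> Hyp S.
Proof.
  intros Hsafe S Z Hst. induction Hst as [S|S S1 Z Hs Hst IH];
    intros A G HZ HA HnA a H E K HM HI.
  - subst. destruct HM as [[s [_ HS]] _]. simpl in HS. injection HS as Ha _.
    exists a, (H ++ map eqa E ++ K). repeat split.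
    + apply (nonbasic_subst s); rewrite <- Ha; auto.
    + intro Hsa; apply HnA; rewrite Ha; apply satisfies_subst; auto.
    + constructor.
  - specialize (IH A G HZ HA HnA). assert (HS1 : S1 <> []) by (subst; eapply steps_ne; eauto).
    assert (HM' := HM). destruct HM' as [[s0 [Hs0 HSe]] _]. simpl in HSe.
    destruct a as [t1 t2|t1 t2|p ts].
    +
      rewrite HSe in Hs. inversion Hs as [u1 u2 G0 nu Hnu| |]; subst.
      destruct (case_eq _ _ _ _ _ _ _ _ _ HM eq_refl (proj1 Hnu)) as [k [Hk HMk]].
      eapply Fl_step; [apply step_eq; exact Hk|].
      rewrite !gsubst_app, gsubst_eqa. apply (core' _ HS1 IH).
      * rewrite <- gsubst_app; auto.
      * destruct HI as [->|HI]; [left; auto|right; eapply iso_eq; eauto].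
    +
      rewrite HSe in Hs. inversion Hs as [|u1 u2 G0 Hnu|]; subst.
      destruct (case_neq _ (H ++ K) E t1 t2 (tsubst s0 t1) (tsubst s0 t2) (gsubst s0 (H ++ K)) HM)
        as [Hnt HM1]; auto.
      * destruct HI as [->|HI]; [intros x _ []|eapply iso_disj; eauto].
      * eapply Fl_step; [apply step_neq; exact Hnt|].
        apply (core' _ HS1 IH); [exact HM1|]. destruct HI as [->|HI]; [left; auto|right; eapply iso_neq; eauto].
    +
      destruct (classic (satisfies M (APred p ts))) as [Hsat|Hnsat].
      2:{ exists (APred p ts), (H ++ map eqa E ++ K). repeat split; auto. constructor. }
      rewrite HSe in Hs. inversion Hs as [| |p' us G0 c nu Hren Hnu]; subst.
      destruct Hren as [c0 [r [Hc0 [Hr [Hc Hcap]]]]].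
      set (T := APred p ts :: H ++ map eqa E ++ K).
      destruct (fresh_ren T c0) as [r' [Hr' Hap]].
      destruct (case_pred _ (H ++ K) E p ts p (map (tsubst s0) ts) (gsubst s0 (H ++ K)) c c0 r
                  (rename_clause r' c0) r' nu HM eq_refl Hr Hc Hcap (proj1 Hnu) Hr' eq_refl)
        as [k [Hk HMk]].
      { intros x Hx. specialize (Hap x Hx). unfold T in Hap. split.
        - intro Hc'; apply Hap. apply in_gvars in Hc' as [b [Hb Hxb]]. apply in_gvars.
          exists b; split; auto. simpl in Hb |- *. rewrite !in_app_iff in Hb. rewrite !in_app_iff. tauto.
        - intro Hc'; apply Hap. apply lvars_gvars, in_gvars in Hc' as [b [Hb Hxb]].
          apply in_gvars. exists b; split; auto. simpl. rewrite !in_app_iff. tauto. }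
      eapply Fl_step.
      * apply step_pred; [|exact Hk]. exists c0, r'. repeat split; auto.
      * rewrite app_assoc, !gsubst_app, gsubst_eqa. apply (core' _ HS1 IH).
        -- rewrite <- app_assoc, <- !gsubst_app; auto.
        -- destruct HI as [->|HI]; [left; auto|right].
           rewrite <- gsubst_app. eapply iso_pred; eauto.
Qed.
End Main.

Lemma gsubst_id : forall g, gsubst Var g = g.
Proof. intros; unfold gsubst; rewrite <- (map_id g) at 2; apply map_ext; intros; apply asubst_fix; auto. Qed.

Lemma init_n : forall P n Eqs R Z, length Eqs = n -> steps P (map eqa Eqs ++ R) Z -> forall A G, Z = A :: G ->
  nonbasic A -> exists S, MGI S R Eqs /\ steps P S Z.
Proof.
  intros P n. induction n as [|n IH]; intros [|[t1 t2] Eqs] R Z Hl Hst A G HZ HA; try discriminate.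
  - exists R. split; auto. split.
    + exists Var; split; [constructor|rewrite gsubst_id; auto].
    + intros s _; exists s; auto.
  - inversion Hst as [G0|G1 G2 G3 Hs Hst']; subst.
    + simpl in H0. injection H0 as <- _. simpl in HA; contradiction.
    + simpl in Hs. inversion Hs as [u1 u2 G0 nu Hnu| |]; subst.
      rewrite gsubst_app, gsubst_eqa in Hst'.
      assert (Hl' : length (map (psubst nu) Eqs) = n) by (rewrite length_map; simpl in Hl; lia).
      destruct (IH _ _ _ Hl' Hst' A G eq_refl HA) as [S [HM HS]].
      exists S; split; auto. eapply MGI_fwd; [apply Hnu|exact HM].
Qed.

Lemma init : forall P Eqs R Z, steps P (map eqa Eqs ++ R) Z -> forall A G, Z = A :: G ->
  nonbasic A -> exists S, MGI S R Eqs /\ steps P S Z.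
Proof. intros; eapply init_n; eauto. Qed.

Theorem lemma2 (P : program) (M : mode) (Eqs : list (term * term)) (G1 : goal) :
  safe M P ->
  (forall a, In a G1 -> ~ is_disequation a) ->
  forall G2 : goal,
    (exists A' G', nonbasic A' /\ ~ satisfies M A' /\
       steps P (map (fun e => AEq (fst e) (snd e)) Eqs ++ G1 ++ G2) (A' :: G')) ->
    (exists A'' G'', nonbasic A'' /\ ~ satisfies M A'' /\
       steps P (G1 ++ map (fun e => AEq (fst e) (snd e)) Eqs ++ G2) (A'' :: G'')).
Proof.
  intros Hsafe HG1 G2 [A' [G' [HA [HnA Hst]]]].
  change (map (fun e => AEq (fst e) (snd e)) Eqs) with (map eqa Eqs) in *.
  destruct (init P Eqs (G1 ++ G2) _ Hst A' G' eq_refl HA) as [S [HM HS]].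
  pose proof (main P M Hsafe S _ HS A' G' eq_refl HA HnA) as Hy.
  pose proof (steps_ne P S A' G' HS) as Hne.
  exact (core' P M S Hne Hy G1 Eqs G2 HM
           (or_intror (fun d b x Hd Hdd _ _ _ _ => HG1 d Hd Hdd))).
Qed.
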